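(* Let $q(x)\in\mathbb{Z}[x]$ be monic and let $\mathrm{sym}(q)(x)=x^{\deg q}\,q\!\left(x+\frac1x\right)$. Then $\mathrm{sym}(q)$ is symplectically irreducible if and only if $q(x)$ is irreducible over $\mathbb{Z}$.
   Context: A symplectic polynomial is an integer polynomial that is the characteristic polynomial of some element of $\mathrm{Sp}(2n,\mathbb{Z})$; equivalently, an even-degree integer polynomial $a_{2n}x^{2n}+\cdots+a_0$ that is monic ($a_{2n}=1$) and palindromic ($a_i=a_{2n-i}$). A symplectic polynomial is symplectically irreducible if it is not the product of two nontrivial symplectic polynomials. *)

(* Defs.v *)
From mathcomp Require Import all_boot all_order all_algebra.
Set Implicit Arguments. Unset Strict Implicit. Unset Printing Implicit Defensive.
Import GRing.Theory.
Local Open Scope ring_scope.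

Definition is_symplectic (p : {poly int}) : Prop :=
  [/\ p \is monic, ~~ odd (size p).-1 &
      forall i : nat, (i <= (size p).-1)%N -> p`_i = p`_((size p).-1 - i)].

(* Symplectically irreducible: a nontrivial symplectic polynomial that is not
   the product of two nontrivial (i.e. different from 1, equivalently of
   positive degree) symplectic polynomials. *)
Definition symp_irreducible (p : {poly int}) : Prop :=
  [/\ is_symplectic p, p != 1 &
      ~ exists a b : {poly int},
          [/\ is_symplectic a, is_symplectic b, a != 1, b != 1 & p = a * b]].

Definition irreducible_Zpoly (q : {poly int}) : Prop :=
  [/\ q != 0, q \isn't a GRing.unit &
      forall a b : {poly int}, q = a * b ->
        a \is a GRing.unit \/ b \is a GRing.unit].

(* sym(q)(x) = x^{deg q} q(x + 1/x) = sum_i q_i x^{deg q - i} (x^2+1)^i. *)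
Definition sym (q : {poly int}) : {poly int} :=
  \sum_(i < size q)
     q`_i *: ('X^((size q).-1 - i) * ('X^2 + 1) ^+ i).

(* Main.v *)
Require Import Defs.
From mathcomp Require Import all_boot all_order all_algebra.
From mathcomp Require Import zify ring.
Set Implicit Arguments. Unset Strict Implicit. Unset Printing Implicit Defensive.
Import GRing.Theory.
Local Open Scope ring_scope.

Definition H (u v : {poly int}) (N : nat) (p : {poly int}) : {poly int} :=
  \sum_(i < N.+1) p`_i *: (u ^+ (N - i) * v ^+ i).

Lemma H0 u v N : H u v N 0 = 0.
Proof. by rewrite /H big1 // => i _; rewrite coef0 scale0r. Qed.

Lemma HD u v N p r : H u v N (p + r) = H u v N p + H u v N r.
Proof. by rewrite /H -big_split /=; apply: eq_bigr => i _; rewrite coefD scalerDl. Qed.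

Lemma HZ u v N c p : H u v N (c *: p) = c *: H u v N p.
Proof. by rewrite /H scaler_sumr; apply: eq_bigr => i _; rewrite coefZ scalerA. Qed.

Lemma HB u v N p r : H u v N (p - r) = H u v N p - H u v N r.
Proof. by rewrite /H -sumrB; apply: eq_bigr => i _; rewrite coefB scalerBl. Qed.

Lemma Hsum u v N m (F : 'I_m -> {poly int}) :
  H u v N (\sum_(i < m) F i) = \sum_(i < m) H u v N (F i).
Proof. exact: (big_morph _ (HD u v N) (H0 u v N)). Qed.

Lemma HXn u v N i : (i <= N)%N -> H u v N 'X^i = u ^+ (N - i) * v ^+ i.
Proof.
move=> iN; rewrite /H (bigD1 (Ordinal (iN : (i < N.+1)%N))) //= coefXn eqxx scale1r.
rewrite big1 ?addr0 // => j /eqP ji; rewrite coefXn.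
have -> : (j == i :> nat) = false by apply/eqP => E; apply: ji; apply: val_inj.
by rewrite scale0r.
Qed.

Lemma Hext u v N (p r : {poly int}) : (forall i, (i <= N)%N -> p`_i = r`_i) -> H u v N p = H u v N r.
Proof. by move=> E; apply: eq_bigr => i _; rewrite E // -ltnS. Qed.

Lemma expand (p : {poly int}) n : (size p <= n)%N -> p = \sum_(i < n) p`_i *: 'X^i.
Proof.
move=> sp; rewrite -poly_def; apply/polyP => k; rewrite coef_poly.
case: ifP => // /negbT; rewrite -leqNgt => nk.
by move/leq_sizeP: sp => ->.
Qed.

Lemma HM u v N M (p r : {poly int}) : (size p <= N.+1)%N -> (size r <= M.+1)%N ->
  H u v (N + M) (p * r) = H u v N p * H u v M r.
Proof.
move=> sp sr.
have E : p * r = \sum_(i < N.+1) \sum_(j < M.+1) (p`_i * r`_j) *: 'X^(i + j).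
  rewrite {1}(expand sp) {1}(expand sr) mulr_suml; apply: eq_bigr => i _.
  rewrite mulr_sumr; apply: eq_bigr => j _.
  by rewrite -scalerAl -scalerAr scalerA exprD.
rewrite E Hsum /H mulr_suml; apply: eq_bigr => i _.
rewrite -/(H u v (N + M) _) Hsum mulr_sumr; apply: eq_bigr => j _.
rewrite HZ HXn; last by have := ltn_ord i; have := ltn_ord j; lia.
rewrite -scalerAl -scalerAr scalerA.
have -> : (N + M - (i + j) = (N - i) + (M - j))%N.
  by have := ltn_ord i; have := ltn_ord j; lia.
by rewrite !exprD; congr (_ *: _); ring.
Qed.
Lemma Hexp u v K (p : {poly int}) k : (size p <= K.+1)%N ->
  H u v (k * K) (p ^+ k) = (H u v K p) ^+ k.
Proof.
move=> sp; elim: k => [|k IH].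
  by rewrite /H big_ord1 /= expr0 coef1 /= !expr0 mulr1 scale1r.
rewrite exprS mulSn HM // ?IH ?exprS //.
have := size_exp p k; case: (size (p ^+ k)) => [|s] //= ->.
rewrite ltnS mulnC; apply: leq_mul => //.
by move: sp; case: (size p).
Qed.

Definition Y : {poly int} := 'X^2 + 1.
Definition S := H 'X Y.
Definition R := H 'X 1.

Lemma R2X : R 2 'X = 'X.
Proof. rewrite /R /H !big_ord_recr big_ord0 /= !coefX /= !scale0r !add0r addr0 scale1r expr1n mulr1 //. Qed.

Lemma R2Y : R 2 Y = Y.
Proof.
rewrite /R /H !big_ord_recr big_ord0 /= /Y !coefD !coefXn !coef1 /=.
by rewrite !expr1n !mulr1 add0r addr0 !scale1r scale0r addr0 expr0 addrC.
Qed.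

Lemma YE : Y = 'X^2 + 1%:P. Proof. by rewrite polyC1. Qed.
Lemma monicY : Y \is monic. Proof. by rewrite YE monicXnaddC. Qed.
Lemma sizeY : size Y = 3%N. Proof. by rewrite YE size_XnaddC. Qed.
Lemma size_Yexp i : size (Y ^+ i) = (i.*2).+1.
Proof.
have := size_exp Y i; rewrite sizeY /=.
have : Y ^+ i != 0 by exact: monic_neq0 (monic_exp i monicY).
rewrite -size_poly_gt0; case: (size _) => // s _ /= ->; by rewrite -muln2 mulnC.
Qed.
Lemma Yexp_top i : (Y ^+ i)`_(i.*2) = 1.
Proof.
have /monicP := monic_exp i monicY; by rewrite /lead_coef size_Yexp.
Qed.

Definition f N i : {poly int} := 'X^(N - i) * Y ^+ i.

Lemma size_f N i : (i <= N)%N -> size (f N i) = (N + i).+1.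
Proof.
move=> iN; rewrite /f size_monicM ?monicXn ?size_polyXn ?size_Yexp //; first by lia.
exact: monic_neq0 (monic_exp i monicY).
Qed.

Lemma SE N q : S N q = \sum_(i < N.+1) q`_i *: f N i.
Proof. by []. Qed.

Lemma sizeS N q : (size (S N q) <= (N.*2).+1)%N.
Proof.
apply/leq_sizeP => j jN; rewrite SE coef_sum big1 // => i _.
have iN : (i <= N)%N by rewrite -ltnS.
have h : (size (f N i) <= j)%N by rewrite size_f //; lia.
by rewrite coefZ; move/leq_sizeP: h => ->; rewrite ?mulr0.
Qed.

Lemma topS N q : (S N q)`_(N.*2) = q`_N.
Proof.
rewrite SE coef_sum big_ord_recr /= big1 ?add0r.
  by rewrite coefZ /f subnn expr0 mul1r Yexp_top mulr1.
move=> i _; have iN : (i <= N)%N by apply: ltnW.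
have h : (size (f N i) <= N.*2)%N by rewrite size_f //; have := ltn_ord i; lia.
by rewrite coefZ; move/leq_sizeP: h => ->; rewrite ?mulr0.
Qed.

Lemma Srec N q : S N.+1 q = 'X * S N q + q`_N.+1 *: Y ^+ N.+1.
Proof.
rewrite !SE big_ord_recr /= {2}/f subnn expr0 mul1r; congr (_ + _).
rewrite mulr_sumr; apply: eq_bigr => i _; rewrite -scalerAr /f mulrA -exprS.
by rewrite subSn // -ltnS.
Qed.

Definition pal K (p : {poly int}) := forall i, (i <= K)%N -> p`_i = p`_(K - i).

Lemma Rpal K p : R K p = p -> pal K p.
Proof.
move=> E i iK; rewrite -{1}E /R /H coef_sum.
have jK : (K - i < K.+1)%N by lia.
rewrite (bigD1 (Ordinal jK)) //= big1 ?addr0.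
  by rewrite expr1n mulr1 coefZ coefXn subKn // eqxx mulr1.
move=> j /eqP ji; rewrite expr1n mulr1 coefZ coefXn.
case: eqP => [E2|]; last by rewrite mulr0.
exfalso; apply: ji; apply: val_inj => /=; have := ltn_ord j; lia.
Qed.

Lemma Rf N i : (i <= N)%N -> R (N.*2) (f N i) = f N i.
Proof.
move=> iN; have -> : (N.*2 = (N - i) * 2 + i * 2)%N by lia.
rewrite /R /f HM; last first.
- by rewrite size_Yexp; lia.
- by rewrite size_polyXn; lia.
by rewrite !Hexp -/R ?R2X ?R2Y ?sizeY ?size_polyX.
Qed.

Lemma palS N q : pal (N.*2) (S N q).
Proof.
apply: Rpal; rewrite {1}SE /R Hsum; apply: eq_bigr => i _.
by rewrite HZ -/R Rf // -ltnS.
Qed.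

Lemma Sinj0 N (q : {poly int}) : (size q <= N.+1)%N -> S N q = 0 -> q = 0.
Proof.
elim: N q => [|N IH] q sq E0.
  have := topS 0 q; rewrite E0 coef0 /= => /esym q0.
  by rewrite (size1_polyC sq) q0 polyC0.
have qN : q`_N.+1 = 0 by rewrite -topS E0 coef0.
have sq' : (size q <= N.+1)%N.
  apply/leq_sizeP => j; rewrite leq_eqVlt => /orP [/eqP <- //|h].
  by move/leq_sizeP: sq; apply.
apply: IH => //; move: E0; rewrite Srec qN scale0r addr0 => /eqP.
by rewrite mulf_eq0 polyX_eq0 /= => /eqP.
Qed.

Lemma Sinj N (q1 q2 : {poly int}) : (size q1 <= N.+1)%N -> (size q2 <= N.+1)%N ->
  S N q1 = S N q2 -> q1 = q2.
Proof.
move=> s1 s2 E; apply/eqP; rewrite -subr_eq0; apply/eqP; apply: (Sinj0 (N := N)).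
  apply/leq_sizeP => j h; rewrite coefB.
  by move/leq_sizeP: s1 => -> //; move/leq_sizeP: s2 => -> //; rewrite subr0.
by rewrite /S HB -/S E subrr.
Qed.

Lemma palY N : pal (N.*2) (Y ^+ N).
Proof. by have := @palS N 'X^N; rewrite /S HXn // subnn expr0 mul1r. Qed.

Lemma Ssurj N (p : {poly int}) : (size p <= (N.*2).+1)%N -> pal (N.*2) p ->
  exists q : {poly int}, (size q <= N.+1)%N /\ p = S N q.
Proof.
elim: N p => [|N IH] p sp pp.
  exists p; split => //; rewrite SE big_ord1 /f /= !expr0 mul1r.
  by rewrite alg_polyC; apply: size1_polyC.
set c := p`_(N.+1.*2).
set p' := p - c *: Y ^+ N.+1.
have pp' : pal (N.+1.*2) p'.
  by move=> i iN; rewrite /p' !coefB !coefZ pp // (palY iN).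
have top' : p'`_(N.+1.*2) = 0 by rewrite /p' coefB coefZ Yexp_top mulr1 subrr.
have bot' : p'`_0 = 0 by rewrite pp' // subn0.
have sp' : (size p' <= N.+1.*2)%N.
  apply/leq_sizeP => j; rewrite leq_eqVlt => /orP [/eqP <- //|h].
  rewrite /p' coefB coefZ; move/leq_sizeP: sp => -> //.
  have h2 : (size (Y ^+ N.+1) <= j)%N by rewrite size_Yexp.
  by move/leq_sizeP: h2 => -> //; rewrite mulr0 subr0.
set p'' := drop_poly 1 p'.
have Ep' : p' = 'X * p''.
  apply/polyP => i; rewrite coefXM /p'' coef_drop_poly.
  by case: i => [|i] //=; rewrite addn1.
have sp'' : (size p'' <= (N.*2).+1)%N by rewrite size_drop_poly; move: sp'; lia.
have pp'' : pal (N.*2) p''.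
  move=> i iN; rewrite /p'' !coef_drop_poly pp'; last by lia.
  by congr (_`_ _); lia.
have [q'' [sq'' Eq'']] := IH _ sp'' pp''.
exists (q'' + c *: 'X^(N.+1)); split.
  apply/leq_sizeP => j h; rewrite coefD coefZ coefXn.
  move/leq_sizeP: sq'' => -> //; last by lia.
  have -> : (j == N.+1) = false by apply/eqP; lia.
  by rewrite mulr0 addr0.
rewrite Srec.
have -> : S N (q'' + c *: 'X^(N.+1)) = S N q''.
  apply: Hext => i iN; rewrite coefD coefZ coefXn.
  have -> : (i == N.+1) = false by apply/eqP; lia.
  by rewrite mulr0 addr0.
rewrite -Eq'' -Ep' coefD coefZ coefXn eqxx mulr1.
move/leq_sizeP: sq'' => -> //; rewrite add0r /p' subrK //.
Qed.

Lemma symS (q : {poly int}) n : size q = n.+1 -> sym q = S n q.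
Proof. by move=> E; rewrite /sym E. Qed.

Lemma monic_size1 (q : {poly int}) : q \is monic -> size q = 1%N -> q = 1.
Proof.
move=> /monicP m s; rewrite (size1_polyC (eq_leq s)).
by move: m; rewrite /lead_coef s /= => ->.
Qed.

Lemma monic_unit (q : {poly int}) : q \is monic -> q \is a GRing.unit -> q = 1.
Proof. by move=> m; rewrite poly_unitE => /andP [/eqP s _]; apply: monic_size1. Qed.

Lemma size_sym (q : {poly int}) : q \is monic ->
  size (sym q) = (((size q).-1).*2).+1.
Proof.
move=> m; have q0 := monic_neq0 m.
have sq : size q = (size q).-1.+1 by rewrite prednK // size_poly_gt0.
rewrite (symS sq); set n := (size q).-1.
apply/eqP; rewrite eqn_leq sizeS /=.
have t : (S n q)`_(n.*2) = 1 by rewrite topS; move/monicP: m; rewrite /lead_coef.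
rewrite ltnNge; apply/negP => /leq_sizeP h; move: (h _ (leqnn _)); rewrite t.
by move/eqP; rewrite oner_eq0.
Qed.

Lemma sym_symp (q : {poly int}) : q \is monic -> Defs.is_symplectic (sym q).
Proof.
move=> m; have q0 := monic_neq0 m.
have sq : size q = (size q).-1.+1 by rewrite prednK // size_poly_gt0.
have ss := size_sym m.
split.
- apply/monicP; rewrite /lead_coef ss /= (symS sq) topS.
  by move/monicP: m; rewrite /lead_coef.
- by rewrite ss /= odd_double.
- by rewrite ss /= => i iK; rewrite (symS sq) palS.
Qed.

Lemma sym_mul (a b : {poly int}) : a \is monic -> b \is monic ->
  sym (a * b) = sym a * sym b.
Proof.
move=> ma mb; have a0 := monic_neq0 ma; have b0 := monic_neq0 mb.
have sa : size a = (size a).-1.+1 by rewrite prednK // size_poly_gt0.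
have sb : size b = (size b).-1.+1 by rewrite prednK // size_poly_gt0.
have sab : size (a * b) = ((size a).-1 + (size b).-1).+1.
  by rewrite size_monicM //; move: sa sb; lia.
rewrite (symS sa) (symS sb) (symS sab) /S HM //; by case: (size _).
Qed.

Lemma sym_inj (a b : {poly int}) : a \is monic -> b \is monic ->
  sym a = sym b -> a = b.
Proof.
move=> ma mb E; have a0 := monic_neq0 ma; have b0 := monic_neq0 mb.
have sa : size a = (size a).-1.+1 by rewrite prednK // size_poly_gt0.
have sb : size b = (size b).-1.+1 by rewrite prednK // size_poly_gt0.
have e : (size a).-1 = (size b).-1.
  by have := size_sym ma; rewrite E size_sym // => /eqP; rewrite eqSS -!muln2 eqn_mul2r /= => /eqP.
move: E; rewrite (symS sa) (symS sb) -e => E.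
apply: (Sinj _ _ E); first by case: (size a).
by rewrite e; case: (size b).
Qed.

Lemma sym1 : sym 1 = 1.
Proof.
rewrite (@symS 1 0) ?size_poly1 // SE big_ord1 coef1 /f /= !expr0 mulr1 scale1r //.
Qed.

Lemma sym_eq1 (q : {poly int}) : q \is monic -> sym q = 1 -> q = 1.
Proof.
move=> m E; apply: monic_size1 => //; have := size_sym m; rewrite E size_poly1.
have q0 := monic_neq0 m; move: q0; rewrite -size_poly_gt0.
case: (size q) => [|[|k]] //= _ /eqP; by rewrite eqSS.
Qed.

Lemma symp_sym (a : {poly int}) : Defs.is_symplectic a ->
  exists q : {poly int}, q \is monic /\ a = sym q.
Proof.
case=> ma ev pa; set K := (size a).-1 in ev pa.
set N := K./2.
have KN : K = N.*2 by rewrite -[LHS]odd_double_half (negbTE ev).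
have a0 := monic_neq0 ma.
have sa : size a = K.+1 by rewrite prednK // size_poly_gt0.
have [q [sq Eq]] : exists q : {poly int}, (size q <= N.+1)%N /\ a = S N q.
  apply: Ssurj; first by rewrite -KN sa.
  by rewrite -KN.
have qN : q`_N = 1.
  rewrite -topS -Eq -KN; move/monicP: ma; by rewrite /lead_coef.
have sq' : size q = N.+1.
  apply/eqP; rewrite eqn_leq sq /= ltnNge; apply/negP => /leq_sizeP h.
  by move: (h _ (leqnn _)); rewrite qN => /eqP; rewrite oner_eq0.
exists q; split; last by rewrite (symS sq').
by apply/monicP; rewrite /lead_coef sq'.
Qed.

Theorem lemma3p1 (q : {poly int}) :
  q \is monic -> (symp_irreducible (sym q) <-> irreducible_Zpoly q).
Proof.
move=> mq; have q0 := monic_neq0 mq; split.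
- case=> sp s1 nof; split => //.
    apply/negP => u; move/negP: s1; apply; apply/eqP.
    by rewrite (monic_unit mq u) sym1.
  move=> a b Eab.
  have lab : lead_coef a * lead_coef b = 1.
    by rewrite -lead_coefM -Eab; apply/monicP.
  set a' := lead_coef b *: a; set b' := lead_coef a *: b.
  have ma' : a' \is monic by apply/monicP; rewrite lead_coefZ mulrC.
  have mb' : b' \is monic by apply/monicP; rewrite lead_coefZ.
  have Eq : q = a' * b'.
    by rewrite /a' /b' -scalerAl -scalerAr scalerA mulrC lab scale1r.
  have [a1|a1] := eqVneq a' 1.
    left; apply/unitrPr; exists (lead_coef b)%:P.
    by rewrite -a1 /a' mulrC mul_polyC.
  have [b1|b1] := eqVneq b' 1.
    right; apply/unitrPr; exists (lead_coef a)%:P.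
    by rewrite -b1 /b' mulrC mul_polyC.
  exfalso; apply: nof; exists (sym a'), (sym b'); split.
  + exact: sym_symp.
  + exact: sym_symp.
  + by apply/eqP => /(sym_eq1 ma') /eqP; rewrite (negbTE a1).
  + by apply/eqP => /(sym_eq1 mb') /eqP; rewrite (negbTE b1).
  + by rewrite Eq sym_mul.
- case=> _ nu irr; split.
  + exact: sym_symp.
  + by apply/eqP => /(sym_eq1 mq) E; move/negP: nu; apply; rewrite E unitr1.
  + case=> a [b [sa sb a1 b1 E]].
    have [qa [mqa Ea]] := symp_sym sa.
    have [qb [mqb Eb]] := symp_sym sb.
    have Eq : q = qa * qb.
      by apply: sym_inj => //; [rewrite monicMl | rewrite sym_mul // -Ea -Eb].
    have [u|u] := irr _ _ Eq.
      by move/eqP: a1; apply; rewrite Ea (monic_unit mqa u) sym1.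
    by move/eqP: b1; apply; rewrite Eb (monic_unit mqb u) sym1.
Qed.
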